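(* Consider the agents $$\dot x_i=\sum_{j=1}^N\alpha_{ij}(t)(y_j-y_i),\qquad y_i=\mathrm{sat}(x_i),\qquad i\in\mathcal V=\{1,\dots,N\},$$ with a common saturation level $s>0$ (homogeneous agents), and time-varying undirected weights satisfying the standing assumptions below. Then for every $i\in\mathcal V$ there exists $x_i^*$ with $\lim_{t\to\infty}x_i(t)=x_i^*$, and $x_i^*\in[\min_{j\in\mathcal V}x_j(t_0),\ \max_{j\in\mathcal V}x_j(t_0)]$.
   Context: $\mathrm{sat}(x)=\mathrm{sign}(x)\min\{|x|,s\}$. Standing assumptions on the time-varying graph: $\alpha_{ij}(t)=\alpha_{ji}(t)\ge0$ for all $t\ge0$, and each $\alpha_{ij}$ is continuous on $[0,\infty)$ except on a set of measure zero; solutions are Carathéodory solutions, i.e. absolutely continuous functions satisfying $x_i(t)=x_i(t_0)+\int_{t_0}^t\sum_j\alpha_{ij}(\tau)(y_j(\tau)-y_i(\tau))\,d\tau$. *)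

(* Defs.v *)
From Stdlib Require Import Reals Lra.
Open Scope R_scope.

Fixpoint rsum (n : nat) (f : nat -> R) : R :=
  match n with
  | O => 0
  | S m => rsum m f + f m
  end.

Fixpoint rmin_over (n : nat) (f : nat -> R) : R :=
  match n with
  | O => f O
  | S O => f O
  | S m => Rmin (rmin_over m f) (f m)
  end.
Fixpoint rmax_over (n : nat) (f : nat -> R) : R :=
  match n with
  | O => f O
  | S O => f O
  | S m => Rmax (rmax_over m f) (f m)
  end.

Definition sign (x : R) : R :=
  match Rlt_dec x 0 with
  | left _ => -1
  | right _ => match Rlt_dec 0 x with left _ => 1 | right _ => 0 end
  end.
Definition sat (s x : R) : R := sign x * Rmin (Rabs x) s.

Definition null_set (E : R -> Prop) : Prop :=
  forall eps, 0 < eps ->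
    exists a b : nat -> R,
      (forall n, a n <= b n) /\
      (forall t, E t -> exists n, a n < t < b n) /\
      (forall n, rsum n (fun k => b k - a k) <= eps).

Definition abs_continuous_on (f : R -> R) (lo hi : R) : Prop :=
  forall eps, 0 < eps -> exists delta, 0 < delta /\
    forall (n : nat) (a b : nat -> R),
      (forall k, (k < n)%nat -> lo <= a k /\ a k <= b k /\ b k <= hi) ->
      (forall k, (S k < n)%nat -> b k <= a (S k)) ->
      rsum n (fun k => b k - a k) < delta ->
      rsum n (fun k => Rabs (f (b k) - f (a k))) < eps.

Definition lim_infty (f : R -> R) (l : R) : Prop :=
  forall eps, 0 < eps -> exists T, forall t, T <= t -> Rabs (f t - l) < eps.

Definition admissible_weights (N : nat) (alpha : nat -> nat -> R -> R) : Prop :=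
  forall i j, (i < N)%nat -> (j < N)%nat ->
    (forall t, 0 <= t -> alpha i j t = alpha j i t /\ 0 <= alpha i j t) /\
    (exists E, null_set E /\
       forall t, 0 <= t -> ~ E t -> continuity_pt (alpha i j) t).

Definition caratheodory_solution (N : nat) (s : R) (alpha : nat -> nat -> R -> R)
  (t0 : R) (x : nat -> R -> R) : Prop :=
  forall i, (i < N)%nat ->
    (forall T, t0 <= T -> abs_continuous_on (x i) t0 T) /\
    (exists E, null_set E /\
       forall t, t0 < t -> ~ E t ->
         derivable_pt_lim (x i) t
           (rsum N (fun j => alpha i j t * (sat s (x j t) - sat s (x i t))))).

(* Main.v *)
Require Import Defs.
From Stdlib Require Import Reals.
From Stdlib Require Import Lra Lia List Classical.
From Stdlib Require Import Ranalysis5.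
Open Scope R_scope.

Lemma rsum_ext n f g : (forall k, (k < n)%nat -> f k = g k) -> rsum n f = rsum n g.
Proof. induction n; simpl; intros H; auto. rewrite IHn; [rewrite H|]; auto; intros; apply H; lia. Qed.

Lemma rsum_le n f g : (forall k, (k < n)%nat -> f k <= g k) -> rsum n f <= rsum n g.
Proof. induction n; simpl; intros H; [lra|]. assert (f n <= g n) by (apply H; lia).
 assert (rsum n f <= rsum n g) by (apply IHn; intros; apply H; lia). lra. Qed.

Lemma rsum_plus n f g : rsum n (fun k => f k + g k) = rsum n f + rsum n g.
Proof. induction n; simpl; [lra|]. rewrite IHn; lra. Qed.

Lemma rsum_opp n f : rsum n (fun k => - f k) = - rsum n f.
Proof. induction n; simpl; [lra|]. rewrite IHn; lra. Qed.

Lemma rsum_minus n f g : rsum n (fun k => f k - g k) = rsum n f - rsum n g.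
Proof. induction n; simpl; [lra|]. rewrite IHn; lra. Qed.

Lemma rsum_scal n c f : rsum n (fun k => c * f k) = c * rsum n f.
Proof. induction n; simpl; [lra|]. rewrite IHn; lra. Qed.

Lemma rsum_const0 n : rsum n (fun _ => 0) = 0.
Proof. induction n; simpl; lra. Qed.

Lemma rsum_nonneg n f : (forall k, (k < n)%nat -> 0 <= f k) -> 0 <= rsum n f.
Proof. intros H. rewrite <- (rsum_const0 n). apply rsum_le; auto. Qed.

Lemma rsum_abs n f : Rabs (rsum n f) <= rsum n (fun k => Rabs (f k)).
Proof. induction n; simpl. rewrite Rabs_R0; lra.
 eapply Rle_trans. apply Rabs_triang. lra. Qed.

Lemma rsum_pos_exists n f : 0 < rsum n f -> exists k, (k < n)%nat /\ 0 < f k.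
Proof. intros H. apply NNPP. intros C. assert (rsum n f <= 0); [|lra].
 rewrite <- (rsum_const0 n). apply rsum_le. intros k Hk.
 apply Rnot_lt_le. intros Hf. apply C. eauto. Qed.

Lemma rsum_exchange n m (a : nat -> nat -> R) :
  rsum n (fun i => rsum m (fun j => a i j)) = rsum m (fun j => rsum n (fun i => a i j)).
Proof. induction n; simpl. rewrite rsum_const0; auto.
 rewrite IHn. rewrite <- rsum_plus. auto. Qed.

Lemma rsum_term_le n f k : (forall j, (j < n)%nat -> 0 <= f j) -> (k < n)%nat -> f k <= rsum n f.
Proof. induction n; intros H Hk; [lia|]. simpl.
 destruct (Nat.eq_dec k n). subst. assert (0 <= rsum n f) by (apply rsum_nonneg; intros; apply H; lia). lra.
 assert (f k <= rsum n f) by (apply IHn; [intros; apply H|]; lia). assert (0 <= f n) by (apply H; lia). lra. Qed.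

Lemma double_sum_nonpos n (a : nat -> nat -> R) :
  (forall i j, (i < n)%nat -> (j < n)%nat -> a i j + a j i <= 0) ->
  rsum n (fun i => rsum n (fun j => a i j)) <= 0.
Proof. intros H.
 assert (2 * rsum n (fun i => rsum n (fun j => a i j)) =
   rsum n (fun i => rsum n (fun j => a i j + a j i))).
 { replace (2 * rsum n (fun i => rsum n (fun j => a i j))) with
    (rsum n (fun i => rsum n (fun j => a i j)) + rsum n (fun j => rsum n (fun i => a i j))) by
    (rewrite <- rsum_exchange; lra).
   rewrite <- rsum_plus. apply rsum_ext. intros. rewrite <- rsum_plus. auto. }
 assert (rsum n (fun i => rsum n (fun j => a i j + a j i)) <= 0).
 { rewrite <- (rsum_const0 n). apply rsum_le. intros i Hi. rewrite <- (rsum_const0 n). apply rsum_le.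
   intros; apply H; auto. }
 lra. Qed.

Ltac dec_in := match goal with |- context [Rle_dec ?a ?b] =>
  lazymatch a with context [Rle_dec _ _] => fail | _ =>
  lazymatch b with context [Rle_dec _ _] => fail | _ => destruct (Rle_dec a b) end end end.
Lemma sat_eq s x : 0 < s -> sat s x = Rmax (-s) (Rmin x s).
Proof. intros Hs. unfold sat, sign, Rmin, Rmax.
 destruct (Rlt_dec x 0); [| destruct (Rlt_dec 0 x)];
 [rewrite Rabs_left by lra | rewrite Rabs_right by lra | replace x with 0 by lra; rewrite Rabs_R0];
 repeat dec_in; lra. Qed.

Lemma sat_mono s x y : 0 < s -> x <= y -> sat s x <= sat s y.
Proof. intros Hs H. rewrite !sat_eq by auto. unfold Rmin, Rmax.
 repeat dec_in; lra. Qed.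

Lemma rsum_mono_n n k f : (forall j, 0 <= f j) -> rsum n f <= rsum (n + k) f.
Proof. intros H. induction k. rewrite Nat.add_0_r; lra.
 replace (n + S k)%nat with (S (n + k)) by lia. simpl. specialize (H (n+k)%nat). lra. Qed.

Definition interl (f g : nat -> R) (n : nat) : R :=
  if Nat.even n then f (Nat.div2 n) else g (Nat.div2 n).

Lemma interl_even f g n : interl f g (2 * n) = f n.
Proof. unfold interl. rewrite Nat.even_even, Nat.div2_double. auto. Qed.
Lemma interl_odd f g n : interl f g (2 * n + 1) = g n.
Proof. unfold interl. rewrite Nat.even_odd, Nat.div2_odd'. auto. Qed.

Lemma rsum_interl m (c1 c2 : nat -> R) :
  rsum (2 * m) (interl c1 c2) = rsum m c1 + rsum m c2.
Proof. induction m. simpl; lra.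
 replace (2 * S m)%nat with (S (S (2 * m))) by lia.
 change (rsum (S (S (2 * m))) (interl c1 c2)) with (rsum (2*m) (interl c1 c2) + interl c1 c2 (2*m)%nat + interl c1 c2 (S (2*m))).
 replace (S (2 * m)) with (2 * m + 1)%nat by lia.
 rewrite IHm, interl_even, interl_odd. simpl. lra. Qed.

Lemma null_union (E1 E2 : R -> Prop) : null_set E1 -> null_set E2 -> null_set (fun t => E1 t \/ E2 t).
Proof. intros H1 H2 eps Heps.
 destruct (H1 (eps/2)) as [a1 [b1 [Hab1 [C1 S1]]]]; [lra|].
 destruct (H2 (eps/2)) as [a2 [b2 [Hab2 [C2 S2]]]]; [lra|].
 exists (interl a1 a2), (interl b1 b2). split; [|split].
 - intros n. unfold interl. destruct (Nat.even n); auto.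
 - intros t [Ht|Ht].
   + destruct (C1 t Ht) as [n Hn]. exists (2*n)%nat. rewrite !interl_even; auto.
   + destruct (C2 t Ht) as [n Hn]. exists (2*n+1)%nat. rewrite !interl_odd; auto.
 - intros n. assert (Hnn : forall j, 0 <= interl b1 b2 j - interl a1 a2 j).
   { intros j. unfold interl. destruct (Nat.even j); [specialize (Hab1 (Nat.div2 j))|specialize (Hab2 (Nat.div2 j))]; lra. }
   eapply Rle_trans. apply (rsum_mono_n n n). apply Hnn.
   replace (n + n)%nat with (2 * n)%nat by lia.
   replace (rsum (2 * n) (fun k => interl b1 b2 k - interl a1 a2 k)) with
     (rsum (2 * n) (interl (fun k => b1 k - a1 k) (fun k => b2 k - a2 k))).
   rewrite rsum_interl. specialize (S1 n). specialize (S2 n). lra.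
   apply rsum_ext. intros. unfold interl. destruct (Nat.even k); auto. Qed.

Lemma null_single (c : R) : null_set (fun t => t = c).
Proof. intros eps Heps.
 exists (fun n => match n with O => c - eps/4 | _ => 0 end), (fun n => match n with O => c + eps/4 | _ => 0 end).
 split; [|split].
 - intros [|n]; lra.
 - intros t ->. exists O. lra.
 - intros n. induction n. simpl; lra. simpl. destruct n; simpl in *; lra. Qed.

Lemma null_sub (E F : R -> Prop) : null_set F -> (forall t, E t -> F t) -> null_set E.
Proof. intros H Hs eps Heps. destruct (H eps Heps) as [a [b [? [C ?]]]]. exists a, b. split; [auto|split; auto]. Qed.

Lemma ac_restrict f lo hi lo' hi' : abs_continuous_on f lo hi -> lo <= lo' -> hi' <= hi ->
  abs_continuous_on f lo' hi'.
Proof. intros H H1 H2 eps Heps. destruct (H eps Heps) as [d [Hd Hp]]. exists d. split; auto.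
 intros n a b Ha Hs Hl. apply Hp; auto. intros k Hk. specialize (Ha k Hk). lra. Qed.

Lemma ac_one f lo hi eps : abs_continuous_on f lo hi -> 0 < eps -> exists d, 0 < d /\
  forall u v, lo <= u -> u <= v -> v <= hi -> v - u < d -> Rabs (f v - f u) < eps.
Proof. intros H Heps. destruct (H eps Heps) as [d [Hd Hp]]. exists d. split; auto.
 intros u v H1 H2 H3 H4. specialize (Hp 1%nat (fun _ => u) (fun _ => v)). simpl in Hp.
 assert (0 + Rabs (f v - f u) < eps); [|lra]. apply Hp. intros; lra. intros; lia. lra. Qed.

Lemma ac_cont f lo hi t : abs_continuous_on f lo hi -> lo < t < hi -> continuity_pt f t.
Proof. intros H Ht. unfold continuity_pt, continue_in, limit1_in, limit_in. simpl. unfold R_dist.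
 intros eps Heps. destruct (ac_one f lo hi eps H Heps) as [d [Hd Hp]].
 exists (Rmin d (Rmin (t - lo) (hi - t))). split. apply Rmin_pos; [|apply Rmin_pos]; lra.
 intros x [_ Hx]. pose proof (Rmin_l d (Rmin (t - lo) (hi - t))). pose proof (Rmin_r d (Rmin (t - lo) (hi - t))).
 pose proof (Rmin_l (t - lo) (hi - t)). pose proof (Rmin_r (t - lo) (hi - t)).
 destruct (Rle_dec x t).
 - rewrite Rabs_left1 in Hx by lra. rewrite Rabs_minus_sym. apply Hp; lra.
 - rewrite Rabs_right in Hx by lra. apply Hp; lra. Qed.

Lemma ac_family n (x : nat -> R -> R) lo hi : (forall i, (i < n)%nat -> abs_continuous_on (x i) lo hi) ->
  forall eps, 0 < eps -> exists delta, 0 < delta /\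
    forall (m : nat) (a b : nat -> R),
      (forall k, (k < m)%nat -> lo <= a k /\ a k <= b k /\ b k <= hi) ->
      (forall k, (S k < m)%nat -> b k <= a (S k)) ->
      rsum m (fun k => b k - a k) < delta ->
      rsum m (fun k => rsum n (fun i => Rabs (x i (b k) - x i (a k)))) < eps.
Proof. induction n; intros Hx eps Heps.
 - exists 1. split; [lra|]. intros. simpl. rewrite rsum_const0. auto.
 - destruct (IHn (fun i Hi => Hx i ltac:(lia)) (eps/2)) as [d1 [Hd1 P1]]; [lra|].
   destruct (Hx n ltac:(lia) (eps/2)) as [d2 [Hd2 P2]]; [lra|].
   exists (Rmin d1 d2). split. apply Rmin_pos; auto.
   intros m a b Ha Hs Hl. simpl. rewrite rsum_plus.
   pose proof (Rmin_l d1 d2). pose proof (Rmin_r d1 d2).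
   assert (rsum m (fun k => rsum n (fun i => Rabs (x i (b k) - x i (a k)))) < eps/2) by (apply P1; auto; lra).
   assert (rsum m (fun k => Rabs (x n (b k) - x n (a k))) < eps/2) by (apply P2; auto; lra). lra. Qed.

Lemma ac_compose n (x : nat -> R -> R) lo hi (psi : R -> R) L : 0 < L ->
  (forall u v, Rabs (psi u - psi v) <= L * Rabs (u - v)) ->
  (forall i, (i < n)%nat -> abs_continuous_on (x i) lo hi) ->
  abs_continuous_on (fun t => rsum n (fun i => psi (x i t))) lo hi.
Proof. intros HL Hpsi Hx eps Heps.
 destruct (ac_family n x lo hi Hx (eps / L)) as [d [Hd P]]. apply Rdiv_lt_0_compat; auto.
 exists d. split; auto. intros m a b Ha Hs Hl.
 specialize (P m a b Ha Hs Hl).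
 apply Rle_lt_trans with (L * rsum m (fun k => rsum n (fun i => Rabs (x i (b k) - x i (a k))))).
 - rewrite <- rsum_scal. apply rsum_le. intros k Hk. rewrite <- rsum_minus. eapply Rle_trans. apply rsum_abs.
   rewrite <- rsum_scal. apply rsum_le. intros. apply Hpsi.
 - apply Rmult_lt_compat_l with (r := L) in P; auto. replace (L * (eps / L)) with eps in P by (field; lra). auto. Qed.


Definition ell (a : R) (aa bb : nat -> R) m t := Rmax 0 (Rmin (bb m) t - Rmax (aa m) a).

Lemma ell_mono a aa bb m t t' : t <= t' -> ell a aa bb m t <= ell a aa bb m t'.
Proof. intros H. unfold ell, Rmax, Rmin. repeat dec_in; lra. Qed.

Lemma ell_a a aa bb m : ell a aa bb m a = 0.
Proof. unfold ell, Rmax, Rmin. repeat dec_in; lra. Qed.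

Lemma ell_le a aa bb (Haabb : forall m, aa m <= bb m) m t : ell a aa bb m t <= bb m - aa m.
Proof. specialize (Haabb m). unfold ell, Rmax, Rmin. repeat dec_in; lra. Qed.

Lemma ell_piece a aa bb m u v : a <= u -> u <= v -> aa m < u -> v < bb m -> v - u <= ell a aa bb m v - ell a aa bb m u.
Proof. intros. unfold ell, Rmax, Rmin. repeat dec_in; lra. Qed.

Definition Q (f : R -> R) (a eps : R) (aa bb : nat -> R) t := exists n (A B : nat -> R) M,
  (forall k, (k < n)%nat -> a <= A k /\ A k <= B k /\ B k <= t) /\
  (forall k, (S k < n)%nat -> B k <= A (S k)) /\
  rsum n (fun k => B k - A k) <= rsum M (fun m => ell a aa bb m t - ell a aa bb m a) /\
  f t - f a <= eps * (t - a) + rsum n (fun k => Rabs (f (B k) - f (A k))).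

Definition piece_ok (f : R -> R) (eps : R) (aa bb : nat -> R) u v := f v - f u <= eps * (v - u) \/ exists m, aa m < u /\ v < bb m.

Lemma Q_a f a eps aa bb : Q f a eps aa bb a.
Proof. exists O, (fun _ => 0), (fun _ => 0), O. simpl. repeat split; intros; try lia; lra. Qed.

Lemma Q_ext f a eps aa bb (Heps : 0 < eps) t t' : Q f a eps aa bb t -> a <= t -> t <= t' -> piece_ok f eps aa bb t t' -> Q f a eps aa bb t'.
Proof. intros [n [A [B [M [H1 [H2 [H3 H4]]]]]]] Ha Htt [Hg | [m [Hm1 Hm2]]].
 - exists n, A, B, M. split; [|split; [|split]].
   + intros k Hk. specialize (H1 k Hk). lra.
   + auto.
   + eapply Rle_trans. apply H3. apply rsum_le. intros. pose proof (ell_mono a aa bb k t t' Htt). lra.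
   + lra.
 - exists (S n), (fun k => if Nat.eq_dec k n then t else A k), (fun k => if Nat.eq_dec k n then t' else B k),
     (M + (S m))%nat. split; [|split; [|split]].
   + intros k Hk. destruct (Nat.eq_dec k n). lra. specialize (H1 k ltac:(lia)). lra.
   + intros k Hk. destruct (Nat.eq_dec k n); [lia|]. destruct (Nat.eq_dec (S k) n).
     * specialize (H1 k ltac:(lia)). lra.
     * apply H2; lia.
   + simpl. destruct (Nat.eq_dec n n); [|lia].
     rewrite (rsum_ext n _ (fun k => B k - A k)) by (intros k Hk; destruct (Nat.eq_dec k n); [lia|auto]).
     assert (Hnn : forall j, 0 <= ell a aa bb j t - ell a aa bb j a) by (intros j; pose proof (ell_mono a aa bb j a t Ha); lra).
     pose proof (rsum_mono_n M (S m) _ Hnn).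
     assert (ell a aa bb m t' - ell a aa bb m t <= rsum (M + S m) (fun j => ell a aa bb j t' - ell a aa bb j t)).
     { apply (rsum_term_le _ (fun j => ell a aa bb j t' - ell a aa bb j t)). intros j _. pose proof (ell_mono a aa bb j t t' Htt). lra. lia. }
     assert (t' - t <= ell a aa bb m t' - ell a aa bb m t) by (apply ell_piece; lra).
     assert (rsum (M + S m) (fun j => ell a aa bb j t' - ell a aa bb j a) = rsum (M + S m) (fun j => ell a aa bb j t' - ell a aa bb j t) + rsum (M + S m) (fun j => ell a aa bb j t - ell a aa bb j a)) by (rewrite <- rsum_plus; apply rsum_ext; intros; lra).
     lra.
   + simpl. destruct (Nat.eq_dec n n); [|lia].
     rewrite (rsum_ext n (fun k => Rabs _) (fun k => Rabs (f (B k) - f (A k)))) by (intros k Hk; destruct (Nat.eq_dec k n); [lia|auto]).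
     assert (f t' - f t <= Rabs (f t' - f t)) by apply RRle_abs. assert (eps * (t - a) <= eps * (t' - a)) by (apply Rmult_le_compat_l; lra). lra.
Qed.


Lemma deriv_piece f s d eps : derivable_pt_lim f s d -> d <= 0 -> 0 < eps ->
  exists del, 0 < del /\ forall u v, s - del < u -> u <= s -> s <= v -> v < s + del ->
    f v - f u <= eps * (v - u).
Proof. intros Hd Hd0 He. destruct (Hd eps He) as [del Hdel]. exists (pos del). split. apply cond_pos.
 intros u v H1 H2 H3 H4.
 assert (Hv : f v - f s <= eps * (v - s)).
 { destruct (Req_dec v s). subst; lra.
   specialize (Hdel (v - s) ltac:(lra) ltac:(rewrite Rabs_right; lra)).
   replace (s + (v - s)) with v in Hdel by lra.
   apply Rabs_def2 in Hdel. destruct Hdel as [Hl _].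
   assert ((f v - f s) / (v - s) < eps + d) by lra.
   apply (Rmult_lt_compat_r (v - s)) in H0; [|lra]. field_simplify in H0; [|lra]. nra. }
 assert (Hu : f s - f u <= eps * (s - u)).
 { destruct (Req_dec u s). subst; lra.
   specialize (Hdel (u - s) ltac:(lra) ltac:(rewrite Rabs_left; lra)).
   replace (s + (u - s)) with u in Hdel by lra.
   apply Rabs_def2 in Hdel. destruct Hdel as [Hl _].
   assert ((f u - f s) / (u - s) < eps + d) by lra.
   replace ((f u - f s) / (u - s)) with ((f s - f u) / (s - u)) in H0 by (field; lra).
   apply (Rmult_lt_compat_r (s - u)) in H0; [|lra]. field_simplify in H0; [|lra]. nra. }
 lra. Qed.

Lemma Q_b f a b eps aa bb : a < b -> 0 < eps -> (forall m, aa m <= bb m) ->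
  (forall s, a <= s <= b -> exists del, 0 < del /\ forall u v, s - del < u -> u <= s -> s <= v -> v < s + del ->
     piece_ok f eps aa bb u v) ->
  Q f a eps aa bb b.
Proof. intros Hab He Haabb Hpc.
 set (S := fun t => a <= t <= b /\ Q f a eps aa bb t).
 assert (Hb : bound S) by (exists b; intros t [Ht _]; lra).
 assert (Hne : exists t, S t) by (exists a; split; [lra|apply Q_a]).
 destruct (completeness S Hb Hne) as [s [Hub Hlub]].
 assert (Has : a <= s) by (apply Hub; split; [lra|apply Q_a]).
 assert (Hsb : s <= b) by (apply Hlub; intros t [Ht _]; lra).
 destruct (Hpc s (conj Has Hsb)) as [del [Hdel Hp]].
 assert (Ht : exists t, S t /\ s - del < t).
 { apply NNPP. intros C. assert (s <= s - del); [|lra]. apply Hlub. intros t Ht.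
   apply Rnot_lt_le. intros Hlt. apply C. eauto. }
 destruct Ht as [t [[Ht1 Ht2] Ht3]]. assert (t <= s) by (apply Hub; split; auto).
 assert (Qs : Q f a eps aa bb s). { apply (Q_ext f a eps aa bb He t s); auto; try lra. apply Hp; lra. }
 destruct (Req_dec s b) as [->|Hne']; auto.
 exfalso. set (v := Rmin b (s + del/2)).
 assert (s < v) by (unfold v, Rmin; destruct (Rle_dec b (s + del/2)); lra).
 assert (v <= b) by apply Rmin_l. assert (v <= s + del/2) by apply Rmin_r.
 assert (S v). { split; [lra|]. apply (Q_ext f a eps aa bb He s v); auto; try lra. apply Hp; lra. }
 assert (v <= s) by (apply Hub; auto). lra. Qed.

Lemma ac_nonincr f a b E : a < b -> abs_continuous_on f a b -> null_set E ->
  (forall t, a < t < b -> ~ E t -> exists d, derivable_pt_lim f t d /\ d <= 0) -> f b <= f a.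
Proof. intros Hab Hac HE Hd.
 assert (Heps : forall eps, 0 < eps -> f b - f a <= eps * (b - a) + eps).
 { intros eps He. destruct (Hac eps He) as [dA [HdA PA]].
   set (E' := fun t => (E t \/ t = a) \/ t = b).
   assert (HE' : null_set E') by (apply null_union; [apply null_union|]; auto using null_single).
   destruct (HE' (dA/2)) as [aa [bb [Haabb [Hcov Hsum]]]]; [lra|].
   assert (Qb : Q f a eps aa bb b).
   { apply Q_b; auto. intros s Hs.
     destruct (classic (E' s)) as [HEs|HEs].
     - destruct (Hcov s HEs) as [m Hm]. exists (Rmin (s - aa m) (bb m - s)). split.
       apply Rmin_pos; lra. intros u v H1 H2 H3 H4. right. exists m.
       pose proof (Rmin_l (s - aa m) (bb m - s)). pose proof (Rmin_r (s - aa m) (bb m - s)). lra.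
     - assert (a < s < b) by (unfold E' in HEs; split; apply Rnot_le_lt; intros C; apply HEs;
         destruct C; auto; right; lra || (left; right; lra)).
       destruct (Hd s H) as [d [Hd1 Hd2]]. intros C; apply HEs; left; left; auto.
       destruct (deriv_piece f s d eps Hd1 Hd2 He) as [del [Hdel P]]. exists del. split; auto.
       intros. left. apply P; auto. }
   destruct Qb as [n [A [B [M [H1 [H2 [H3 H4]]]]]]].
   assert (rsum n (fun k => B k - A k) < dA).
   { eapply Rle_lt_trans. apply H3.
     rewrite (rsum_ext M _ (fun m => ell a aa bb m b)) by (intros; rewrite ell_a; lra).
     eapply Rle_lt_trans. apply rsum_le with (g := fun m => bb m - aa m). intros; apply ell_le; auto.
     specialize (Hsum M). lra. }
   assert (rsum n (fun k => Rabs (f (B k) - f (A k))) < eps) by (apply PA; auto).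
   lra. }
 apply Rnot_lt_le. intros C.
 set (eps := (f b - f a) / (b - a + 2)).
 assert (0 < eps) by (apply Rdiv_lt_0_compat; lra).
 specialize (Heps eps H). assert (eps * (b - a + 1) < f b - f a); [|lra].
 unfold eps. apply Rlt_le_trans with ((f b - f a) / (b - a + 2) * (b - a + 2)).
 apply Rmult_lt_compat_l; [auto|lra]. right. field. lra. Qed.

Definition phi K z := if Rle_dec z 0 then 0 else if Rle_dec z K then z * z / 2 else K * z - K * K / 2.
Definition dphi K z := if Rle_dec z 0 then 0 else if Rle_dec z K then z else K.

Lemma phi_taylor K z h : 0 < K -> Rabs (phi K (z + h) - phi K z - h * dphi K z) <= h * h / 2.
Proof. intros HK. unfold phi, dphi. repeat dec_in; apply Rabs_le; split; nra. Qed.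

Lemma phi_lip K u v : 0 < K -> Rabs (phi K u - phi K v) <= K * Rabs (u - v).
Proof. intros HK. unfold phi. destruct (Rle_dec u v).
 - rewrite (Rabs_left1 (u - v)) by lra. repeat dec_in; apply Rabs_le; split; nra.
 - rewrite (Rabs_right (u - v)) by lra. repeat dec_in; apply Rabs_le; split; nra. Qed.

Lemma dphi_mono K u v : 0 < K -> u <= v -> dphi K u <= dphi K v.
Proof. intros HK H. unfold dphi. repeat dec_in; lra. Qed.

Lemma phi_nonneg K z : 0 < K -> 0 <= phi K z.
Proof. intros HK. unfold phi. repeat dec_in; nra. Qed.

Lemma phi_pos K z : 0 < K -> 0 < z -> 0 < phi K z.
Proof. intros HK Hz. unfold phi. repeat dec_in; nra. Qed.

Lemma phi_zero K z : z <= 0 -> phi K z = 0.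
Proof. intros Hz. unfold phi. repeat dec_in; lra. Qed.

Lemma phi_quad K z : 0 <= z -> z <= K -> phi K z = z * z / 2.
Proof. intros. unfold phi. repeat dec_in; try lra. assert (z = 0) by lra. subst. lra. Qed.

Lemma taylor_deriv (g dg : R -> R) C z : 0 <= C -> (forall h, Rabs (g (z + h) - g z - h * dg z) <= C * (h * h)) ->
  derivable_pt_lim g z (dg z).
Proof. intros HC H eps Heps. assert (HC1 : 0 < C + 1) by lra. exists (mkposreal (eps / (C + 1)) (Rdiv_lt_0_compat _ _ Heps HC1)).
 simpl. intros h Hh Hlt. specialize (H h).
 replace ((g (z + h) - g z) / h - dg z) with ((g (z + h) - g z - h * dg z) * / h) by (field; auto).
 rewrite Rabs_mult, Rabs_inv.
 assert (Hh0 : 0 < Rabs h) by (apply Rabs_pos_lt; auto).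
 replace (h * h) with (Rabs h * Rabs h) in H by (rewrite <- Rabs_mult; apply Rabs_right; nra).
 apply Rle_lt_trans with (C * (Rabs h * Rabs h) * / Rabs h).
 apply Rmult_le_compat_r; auto. left; apply Rinv_0_lt_compat; auto.
 replace (C * (Rabs h * Rabs h) * / Rabs h) with (C * Rabs h) by (field; lra).
 apply Rle_lt_trans with ((C + 1) * Rabs h). nra.
 apply Rmult_lt_compat_l with (r := C + 1) in Hlt; [|lra].
 replace ((C + 1) * (eps / (C + 1))) with eps in Hlt by (field; lra). auto. Qed.

Lemma phi_deriv K z : 0 < K -> derivable_pt_lim (phi K) z (dphi K z).
Proof. intros HK. apply (taylor_deriv _ _ (1/2)); [lra|]. intros h.
 eapply Rle_trans. apply phi_taylor; auto. lra. Qed.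

Lemma deriv_rsum n (g : nat -> R -> R) (dg : nat -> R) t :
  (forall i, (i < n)%nat -> derivable_pt_lim (g i) t (dg i)) ->
  derivable_pt_lim (fun u => rsum n (fun i => g i u)) t (rsum n dg).
Proof. induction n; intros H; simpl.
 - apply derivable_pt_lim_ext with (f := fct_cte 0). intros; reflexivity. apply derivable_pt_lim_const.
 - apply derivable_pt_lim_ext with (f := ((fun u => rsum n (fun i => g i u)) + g n)%F).
   intros; reflexivity. apply derivable_pt_lim_plus. apply IHn; intros; apply H; lia. apply H; lia. Qed.

Lemma null_family N t0 (P : nat -> R -> Prop) :
  (forall i, (i < N)%nat -> exists E, null_set E /\ forall t, t0 < t -> ~ E t -> P i t) ->
  exists E, null_set E /\ forall i, (i < N)%nat -> forall t, t0 < t -> ~ E t -> P i t.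
Proof. induction N; intros H.
 - exists (fun _ => False). split. intros eps He. exists (fun _ => 0), (fun _ => 0). split; [intros; lra|split].
   intros t []. intros n. rewrite (rsum_ext n _ (fun _ => 0)) by (intros; lra). rewrite rsum_const0; lra.
   intros; lia.
 - destruct IHN as [E1 [HE1 P1]]. intros; apply H; lia.
   destruct (H N ltac:(lia)) as [E2 [HE2 P2]].
   exists (fun t => E1 t \/ E2 t). split. apply null_union; auto.
   intros i Hi t Ht HE. destruct (Nat.eq_dec i N). subst. apply P2; auto.
   apply P1; auto; lia. Qed.

Lemma ode_mono N s alpha t0 x (psi dpsi : R -> R) L :
  0 < s -> 0 <= t0 -> admissible_weights N alpha -> caratheodory_solution N s alpha t0 x ->
  0 < L -> (forall u v, Rabs (psi u - psi v) <= L * Rabs (u - v)) ->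
  (forall z, derivable_pt_lim psi z (dpsi z)) -> (forall u v, u <= v -> dpsi u <= dpsi v) ->
  forall t1 t2, t0 <= t1 -> t1 <= t2 ->
    rsum N (fun i => psi (x i t2)) <= rsum N (fun i => psi (x i t1)).
Proof. intros Hs Ht0 Hadm Hsol HL Hlip Hder Hmono t1 t2 H1 H2.
 destruct (Req_dec t1 t2) as [<-|Hne]; [lra|].
 destruct (null_family N t0 (fun i t => derivable_pt_lim (x i) t
           (rsum N (fun j => alpha i j t * (sat s (x j t) - sat s (x i t)))))) as [E [HE PE]].
 { intros i Hi. apply (Hsol i Hi). }
 apply (ac_nonincr (fun t => rsum N (fun i => psi (x i t))) t1 t2 E); auto; [lra| |].
 - apply ac_compose with (L := L); auto. intros i Hi. apply ac_restrict with t0 t2; try lra.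
   apply (Hsol i Hi). lra.
 - intros t Ht HEt. eexists. split.
   + apply deriv_rsum. intros i Hi. apply derivable_pt_lim_ext with (f := comp psi (x i)). intros; reflexivity.
     apply derivable_pt_lim_comp. apply PE; auto; lra. apply Hder.
   + simpl. rewrite (rsum_ext N _ (fun i => rsum N (fun j => dpsi (x i t) * (alpha i j t * (sat s (x j t) - sat s (x i t)))))).
     2: { intros i Hi. rewrite <- rsum_scal. auto. }
     apply double_sum_nonpos. intros i j Hi Hj.
     destruct (Hadm i j Hi Hj) as [Hsym _]. destruct (Hsym t ltac:(lra)) as [Heq Hp].
     rewrite <- Heq.
     destruct (Rle_dec (x i t) (x j t)).
     * pose proof (Hmono _ _ r). pose proof (sat_mono s _ _ Hs r).
       assert (0 <= alpha i j t * ((dpsi (x j t) - dpsi (x i t)) * (sat s (x j t) - sat s (x i t)))) by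
         (apply Rmult_le_pos; [auto|apply Rmult_le_pos; lra]). nra.
     * assert (x j t <= x i t) by lra. pose proof (Hmono _ _ H). pose proof (sat_mono s _ _ Hs H).
       assert (0 <= alpha i j t * ((dpsi (x i t) - dpsi (x j t)) * (sat s (x i t) - sat s (x j t)))) by
         (apply Rmult_le_pos; [auto|apply Rmult_le_pos; lra]). nra.
Qed.

Lemma Rabs_le_inv a b : Rabs a <= b -> - b <= a <= b.
Proof. intros H. pose proof (Rle_abs a). pose proof (Rle_abs (-a)). rewrite Rabs_Ropp in H1. lra. Qed.

Lemma cover_len rho : 0 < rho -> forall n (L : list R), (length L <= n)%nat -> forall p q, p <= q ->
  (forall y, p <= y <= q -> exists a, In a L /\ Rabs (y - a) < rho) ->
  q - p <= 2 * rho * INR (length L).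
Proof. intros Hr. induction n; intros L HL p q Hpq Hc.
 - destruct (Hc p ltac:(lra)) as [a [Ha _]]. destruct L; simpl in *; [contradiction|lia].
 - destruct (Hc p ltac:(lra)) as [a [Ha Hpa]].
   pose proof (remove_length_lt Req_dec_T L a Ha) as Hlen.
   assert (H1 : 1 <= INR (length L)) by (apply (le_INR 1); lia).
   apply Rabs_def2 in Hpa.
   destruct (Rlt_dec q (a + rho)).
   + nra.
   + assert (q - (a + rho) <= 2 * rho * INR (length (remove Req_dec_T a L))).
     { apply IHn. lia. lra. intros y Hy. destruct (Hc y ltac:(lra)) as [a' [Ha' Hya']].
       exists a'. split; auto. apply in_in_remove; auto. intros ->. apply Rabs_def2 in Hya'. lra. }
     assert (INR (length (remove Req_dec_T a L)) <= INR (length L) - 1).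
     { rewrite <- (minus_INR _ 1) by lia. apply le_INR. lia. }
     nra. Qed.

Lemma cont_cover (g : R -> R) T t rho (L : list R) : 0 < rho -> T <= t ->
  (forall tau, T <= tau <= t -> continuity_pt g tau) ->
  (forall tau, T <= tau <= t -> exists a, In a L /\ Rabs (g tau - a) < rho) ->
  Rabs (g t - g T) <= 2 * rho * INR (length L).
Proof. intros Hr HT Hc Hcov.
 assert (Hivt : forall y, Rmin (g T) (g t) <= y <= Rmax (g T) (g t) -> exists tau, T <= tau <= t /\ g tau = y).
 { intros y Hy. destruct (Req_dec y (g T)) as [->|HyT]. exists T; split; [lra|auto].
   destruct (Req_dec y (g t)) as [->|Hyt]. exists t; split; [lra|auto].
   assert (HTt : T < t). { destruct (Req_dec T t); [subst; rewrite Rmin_left, Rmax_left in Hy by lra; lra|lra]. }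
   destruct (Rle_dec (g T) (g t)).
   - rewrite Rmin_left, Rmax_right in Hy by lra.
     destruct (IVT_interv (fun u => g u - y) T t) as [z [Hz1 Hz2]]; auto.
     intros a0 Ha0. apply continuity_pt_minus. apply Hc; auto. apply continuity_pt_const. intros ? ?; auto. lra. lra.
     exists z; split; auto; lra.
   - rewrite Rmin_right, Rmax_left in Hy by lra.
     destruct (IVT_interv (fun u => y - g u) T t) as [z [Hz1 Hz2]]; auto.
     intros a0 Ha0. apply continuity_pt_minus. apply continuity_pt_const. intros ? ?; auto. apply Hc; auto. lra. lra.
     exists z; split; auto; lra. }
 assert (Rmax (g T) (g t) - Rmin (g T) (g t) <= 2 * rho * INR (length L)).
 { apply (cover_len rho Hr (length L) L (le_n _)). unfold Rmin, Rmax; repeat dec_in; lra.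
   intros y Hy. destruct (Hivt y Hy) as [tau [Htau <-]]. apply Hcov; auto. }
 unfold Rmin, Rmax in H. destruct (Rle_dec (g T) (g t)).
 rewrite Rabs_right by lra. lra. rewrite Rabs_left by lra. lra. Qed.

Lemma cauchy_lim (g : R -> R) t0 :
  (forall eta, 0 < eta -> exists T, t0 <= T /\ forall t, T <= t -> Rabs (g t - g T) <= eta) ->
  exists l, lim_infty g l.
Proof. intros H.
 set (u := fun n => g (t0 + INR n)).
 assert (Hc : Cauchy_crit u).
 { intros eps He. destruct (H (eps/3)) as [T [HT P]]; [lra|].
   destruct (INR_unbounded (T - t0)) as [N0 HN0]. exists N0. intros n m Hn Hm. unfold R_dist, u.
   apply le_INR in Hn. apply le_INR in Hm.
   pose proof (P (t0 + INR n) ltac:(lra)). pose proof (P (t0 + INR m) ltac:(lra)).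
   apply Rabs_le_inv in H0. apply Rabs_le_inv in H1. apply Rabs_def1; lra. }
 destruct (R_complete u Hc) as [l Hl]. exists l.
 intros eps He. destruct (H (eps/3)) as [T [HT P]]; [lra|].
 destruct (INR_unbounded (T - t0)) as [N0 HN0]. destruct (Hl (eps/3)) as [N1 HN1]; [lra|].
 exists T. intros t Ht. set (n := Nat.max N0 N1).
 specialize (HN1 n ltac:(lia)). unfold R_dist, u in HN1.
 assert (INR N0 <= INR n) by (apply le_INR; lia).
 pose proof (P t Ht). pose proof (P (t0 + INR n) ltac:(lra)).
 apply Rabs_le_inv in H1. apply Rabs_le_inv in H2. apply Rabs_def2 in HN1. apply Rabs_def1; lra. Qed.

Definition tdiff K h w := phi K w - 3 * phi K (w - h) + 3 * phi K (w - 2 * h) - phi K (w - 3 * h).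

Lemma phi_sq K z : 0 < K -> z <= K -> phi K z = (Rmax 0 z) * (Rmax 0 z) / 2.
Proof. intros. unfold Rmax. destruct (Rle_dec 0 z). rewrite phi_quad; auto. rewrite phi_zero; lra. Qed.

Lemma tdiff_props K h w : 0 < K -> 0 < h -> w <= K ->
  0 <= tdiff K h w /\ (0 < tdiff K h w -> 0 < w < 3 * h) /\ (h <= w <= 2 * h -> h * h / 2 <= tdiff K h w).
Proof. intros HK Hh Hw. unfold tdiff. rewrite !phi_sq by lra.
 unfold Rmax. repeat dec_in; repeat split; intros; try nra. Qed.

Lemma unif_single (g : R -> R) t0 : (forall t, t0 <= t -> 0 <= g t) ->
  (forall t1 t2, t0 <= t1 -> t1 <= t2 -> g t2 <= g t1) ->
  forall delta, 0 < delta -> forall T0, t0 <= T0 -> exists T, T0 <= T /\ forall t, T <= t -> g T - g t <= delta.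
Proof. intros Hpos Hmon delta Hd T0 HT0.
 set (S := fun y => exists t, T0 <= t /\ y = - g t).
 assert (Hb : bound S) by (exists 0; intros y [t [Ht ->]]; pose proof (Hpos t ltac:(lra)); lra).
 assert (Hne : exists y, S y) by (exists (- g T0); exists T0; split; [lra|auto]).
 destruct (completeness S Hb Hne) as [l [Hub Hlub]].
 assert (HT : exists T, T0 <= T /\ l - delta < - g T).
 { apply NNPP. intros C. assert (l <= l - delta); [|lra]. apply Hlub. intros y [t [Ht ->]].
   apply Rnot_lt_le. intros Hlt. apply C. exists t. split; auto. }
 destruct HT as [T [HT1 HT2]]. exists T. split; auto. intros t Ht.
 assert (- g t <= l) by (apply Hub; exists t; split; [lra|auto]). lra. Qed.

Lemma unif_grid (g : nat -> R -> R) t0 : (forall k t, t0 <= t -> 0 <= g k t) ->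
  (forall k t1 t2, t0 <= t1 -> t1 <= t2 -> g k t2 <= g k t1) ->
  forall delta, 0 < delta -> forall G T0, t0 <= T0 -> exists T, T0 <= T /\
    forall k, (k <= G)%nat -> forall t, T <= t -> g k T - g k t <= delta.
Proof. intros Hpos Hmon delta Hd G. induction G; intros T0 HT0.
 - destruct (unif_single (g O) t0 (Hpos O) (Hmon O) delta Hd T0 HT0) as [T [HT P]].
   exists T. split; auto. intros k Hk. replace k with O by lia. auto.
 - destruct (IHG T0 HT0) as [T [HT P]].
   destruct (unif_single (g (S G)) t0 (Hpos (S G)) (Hmon (S G)) delta Hd T ltac:(lra)) as [T' [HT' P']].
   exists T'. split; [lra|]. intros k Hk t Ht. destruct (Nat.eq_dec k (S G)). subst; auto.
   specialize (P k ltac:(lia) t ltac:(lra)). pose proof (Hmon k T T' ltac:(lra) HT'). lra. Qed.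

Lemma grid_find lo step : 0 < step -> forall G y, lo <= y <= lo + INR G * step ->
  exists k, (k <= G)%nat /\ lo + INR k * step <= y <= lo + INR k * step + step.
Proof. intros Hs G. induction G; intros y Hy.
 - exists O. simpl in *. split; [lia|]. lra.
 - destruct (Rlt_dec (lo + INR G * step) y) as [Hlt|Hge].
   + exists G. split; [lia|]. rewrite S_INR in *. lra.
   + destruct (IHG y) as [k [Hk P]]; [split; lra|]. exists k; split; [lia|auto]. Qed.

Definition Pf N (x : nat -> R -> R) K c t := rsum N (fun j => phi K (x j t - c)).

Lemma tsum N x K h c t : rsum N (fun j => tdiff K h (x j t - c)) =
  Pf N x K c t - 3 * Pf N x K (c + h) t + 3 * Pf N x K (c + 2 * h) t - Pf N x K (c + 3 * h) t.
Proof. unfold Pf. induction N; simpl. lra. rewrite IHN. unfold tdiff.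
 replace (x N t - c - h) with (x N t - (c + h)) by ring.
 replace (x N t - c - 2 * h) with (x N t - (c + 2 * h)) by ring.
 replace (x N t - c - 3 * h) with (x N t - (c + 3 * h)) by ring. lra. Qed.

Lemma conv_abstract N (x : nat -> R -> R) t0 m0 M0 i :
  (i < N)%nat -> m0 <= M0 ->
  (forall j t, (j < N)%nat -> t0 <= t -> m0 <= x j t <= M0) ->
  (forall j t, (j < N)%nat -> t0 < t -> continuity_pt (x j) t) ->
  (forall K c, 0 < K -> forall t1 t2, t0 <= t1 -> t1 <= t2 -> Pf N x K c t2 <= Pf N x K c t1) ->
  exists l, lim_infty (x i) l.
Proof. intros Hi Hm Hb Hc Hmon. apply (cauchy_lim _ t0). intros eta Heta.
 assert (HN : 0 <= INR N) by apply pos_INR.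
 set (h := eta / (4 * INR N + 1)).
 assert (Hh : 0 < h) by (apply Rdiv_lt_0_compat; lra).
 assert (Hh4 : 4 * h * INR N <= eta).
 { unfold h. apply Rmult_le_reg_r with (4 * INR N + 1). lra.
   replace (4 * (eta / (4 * INR N + 1)) * INR N * (4 * INR N + 1)) with (4 * eta * INR N) by (field; lra). nra. }
 set (K := M0 - m0 + 4 * h + 1). assert (HK : 0 < K) by (unfold K; lra).
 set (lo := m0 - 2 * h). set (step := h / 2). assert (Hst : 0 < step) by (unfold step; lra).
 destruct (INR_unbounded ((M0 - lo) / step)) as [G0 HG0].
 assert (HG0' : M0 < lo + INR G0 * step).
 { apply Rmult_gt_compat_r with (r := step) in HG0; auto.
   replace ((M0 - lo) / step * step) with (M0 - lo) in HG0 by (field; lra). lra. }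
 set (p := fun k => lo + INR k * step).
 destruct (unif_grid (fun k t => Pf N x K (p k) t) t0) with (delta := h * h / 16) (G := (G0 + 6)%nat) (T0 := t0 + 1)
   as [T [HT P]].
 { intros k t Ht. apply rsum_nonneg. intros. apply phi_nonneg; auto. }
 { intros k t1 t2 H1 H2. apply Hmon; auto. }
 { nra. } { lra. }
 exists T. split; [lra|]. intros t Ht.
 assert (Hclose : forall tau, T <= tau -> exists j, (j < N)%nat /\ Rabs (x i tau - x j T) < 2 * h).
 { intros tau Htau. pose proof (Hb i tau Hi ltac:(lra)) as Hv.
   destruct (grid_find lo step Hst G0 (x i tau - h)) as [k [Hk Hpk]].
   { unfold lo in *. split; lra. }
   fold (p k) in Hpk. assert (Hpk' : p k <= x i tau - h <= p k + step) by auto. clear Hpk.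
   assert (Hplo : lo <= p k) by (unfold p; pose proof (pos_INR k); nra).
   assert (E2 : p (k + 2)%nat = p k + h) by (unfold p, step; rewrite plus_INR; simpl; lra).
   assert (E4 : p (k + 4)%nat = p k + 2 * h) by (unfold p, step; rewrite plus_INR; simpl; lra).
   assert (E6 : p (k + 6)%nat = p k + 3 * h) by (unfold p, step; rewrite plus_INR; simpl; lra).
   assert (Hw : forall j s, (j < N)%nat -> t0 <= s -> x j s - p k <= K).
   { intros j s Hj Hs. pose proof (Hb j s Hj Hs). unfold K, lo in *. lra. }
   assert (Htt : h * h / 2 <= rsum N (fun j => tdiff K h (x j tau - p k))).
   { eapply Rle_trans. 2: apply (rsum_term_le _ (fun j => tdiff K h (x j tau - p k))).
     apply (tdiff_props K h (x i tau - p k)); auto. apply Hw; auto; lra. unfold step in *; lra.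
     intros j Hj. apply tdiff_props; auto. apply Hw; auto; lra. auto. }
   rewrite tsum in Htt.
   assert (D : forall m, (m <= 6)%nat -> 0 <= Pf N x K (p (k + m)%nat) T - Pf N x K (p (k + m)%nat) tau <= h * h / 16).
   { intros m Hm6. split. pose proof (Hmon K (p (k + m)%nat) HK T tau ltac:(lra) Htau). lra.
     apply (P (k + m)%nat ltac:(lia) tau Htau). }
   pose proof (D 0%nat ltac:(lia)) as D0. pose proof (D 2%nat ltac:(lia)) as D2.
   pose proof (D 4%nat ltac:(lia)) as D4. pose proof (D 6%nat ltac:(lia)) as D6.
   rewrite Nat.add_0_r in D0. rewrite E2 in D2. rewrite E4 in D4. rewrite E6 in D6.
   assert (Hhh : 0 < h * h) by nra.
   assert (HTT : 0 < rsum N (fun j => tdiff K h (x j T - p k))) by (rewrite tsum; lra).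
   destruct (rsum_pos_exists _ _ HTT) as [j [Hj Hpos]].
   destruct (tdiff_props K h (x j T - p k) HK Hh (Hw j T Hj ltac:(lra))) as [_ [Hr _]].
   specialize (Hr Hpos). exists j. split; auto. apply Rabs_def1; unfold step in *; lra. }
 set (L := map (fun j => x j T) (seq 0 N)).
 assert (Hlen : length L = N) by (unfold L; rewrite length_map, length_seq; auto).
 eapply Rle_trans. apply (cont_cover (x i) T t (2 * h) L); try lra.
 - intros tau Htau. apply Hc; auto; lra.
 - intros tau Htau. destruct (Hclose tau ltac:(lra)) as [j [Hj Hj']]. exists (x j T). split; auto.
   unfold L. apply in_map_iff. exists j. split; auto. apply in_seq. lia.
 - rewrite Hlen. lra. Qed.

Lemma rmin_le n f : (1 <= n)%nat -> forall j, (j < n)%nat -> rmin_over n f <= f j.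
Proof. induction n as [|n IH]; intros Hn j Hj; [lia|].
 destruct n. replace j with O by lia. simpl. lra.
 change (rmin_over (S (S n)) f) with (Rmin (rmin_over (S n) f) (f (S n))).
 destruct (Nat.eq_dec j (S n)). subst. apply Rmin_r.
 eapply Rle_trans. apply Rmin_l. apply IH; lia. Qed.

Lemma rmax_ge n f : (1 <= n)%nat -> forall j, (j < n)%nat -> f j <= rmax_over n f.
Proof. induction n as [|n IH]; intros Hn j Hj; [lia|].
 destruct n. replace j with O by lia. simpl. lra.
 change (rmax_over (S (S n)) f) with (Rmax (rmax_over (S n) f) (f (S n))).
 destruct (Nat.eq_dec j (S n)). subst. apply Rmax_r.
 eapply Rle_trans. 2: apply Rmax_l. apply IH; lia. Qed.

Lemma lim_bound g l t0 a b : lim_infty g l -> (forall t, t0 <= t -> a <= g t <= b) -> a <= l <= b.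
Proof. intros Hl Hb. split; apply Rnot_lt_le; intros C.
 - destruct (Hl (a - l) ltac:(lra)) as [T HT]. specialize (HT (Rmax T t0) (Rmax_l _ _)).
   specialize (Hb (Rmax T t0) (Rmax_r _ _)). apply Rabs_def2 in HT. lra.
 - destruct (Hl (l - b) ltac:(lra)) as [T HT]. specialize (HT (Rmax T t0) (Rmax_l _ _)).
   specialize (Hb (Rmax T t0) (Rmax_r _ _)). apply Rabs_def2 in HT. lra. Qed.

Theorem lemma5 (N : nat) (s : R) (alpha : nat -> nat -> R -> R) (t0 : R)
  (x : nat -> R -> R) :
  0 < s -> 0 <= t0 ->
  admissible_weights N alpha ->
  caratheodory_solution N s alpha t0 x ->
  forall i, (i < N)%nat ->
    exists xs, lim_infty (x i) xs /\
      rmin_over N (fun j => x j t0) <= xs <= rmax_over N (fun j => x j t0).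
Proof. intros Hs Ht0 Hadm Hsol i Hi.
 set (m0 := rmin_over N (fun j => x j t0)). set (M0 := rmax_over N (fun j => x j t0)).
 assert (Hup : forall K c, 0 < K -> forall t1 t2, t0 <= t1 -> t1 <= t2 -> Pf N x K c t2 <= Pf N x K c t1).
 { intros K c HK t1 t2 H1 H2. unfold Pf.
   apply (ode_mono N s alpha t0 x (fun z => phi K (z - c)) (fun z => dphi K (z - c)) K); auto.
   - intros u v. replace (u - v) with ((u - c) - (v - c)) by ring. apply phi_lip; auto.
   - intros z. apply (taylor_deriv (fun z => phi K (z - c)) (fun z => dphi K (z - c)) (1/2)); [lra|]. intros h.
     replace (z + h - c) with ((z - c) + h) by ring. eapply Rle_trans. apply phi_taylor; auto. lra.
   - intros u v Huv. apply dphi_mono; auto; lra. }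
 assert (Hdown : forall K c, 0 < K -> forall t1 t2, t0 <= t1 -> t1 <= t2 ->
   rsum N (fun j => phi K (c - x j t2)) <= rsum N (fun j => phi K (c - x j t1))).
 { intros K c HK t1 t2 H1 H2.
   apply (ode_mono N s alpha t0 x (fun z => phi K (c - z)) (fun z => - dphi K (c - z)) K); auto.
   - intros u v. replace (u - v) with (- ((c - u) - (c - v))) by ring. rewrite Rabs_Ropp. apply phi_lip; auto.
   - intros z. apply (taylor_deriv (fun z => phi K (c - z)) (fun z => - dphi K (c - z)) (1/2)); [lra|]. intros h.
     replace (c - (z + h)) with ((c - z) + - h) by ring.
     replace (h * - dphi K (c - z)) with (- h * dphi K (c - z)) by ring.
     eapply Rle_trans. apply phi_taylor; auto. lra.
   - intros u v Huv. apply Ropp_le_contravar. apply dphi_mono; auto; lra. }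
 assert (Hb : forall j t, (j < N)%nat -> t0 <= t -> m0 <= x j t <= M0).
 { intros j t Hj Ht. split; apply Rnot_lt_le; intros C.
   - pose proof (Hdown 1 m0 ltac:(lra) t0 t ltac:(lra) Ht).
     rewrite (rsum_ext N (fun j => phi 1 (m0 - x j t0)) (fun _ => 0)) in H.
     2: { intros k Hk. apply phi_zero. pose proof (rmin_le N (fun j => x j t0) ltac:(lia) k Hk). unfold m0. lra. }
     rewrite rsum_const0 in H.
     assert (0 < phi 1 (m0 - x j t)) by (apply phi_pos; lra).
     pose proof (rsum_term_le N (fun j => phi 1 (m0 - x j t)) j ltac:(intros; apply phi_nonneg; lra) Hj).
     simpl in H1. lra.
   - pose proof (Hup 1 M0 ltac:(lra) t0 t ltac:(lra) Ht). unfold Pf in H.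
     rewrite (rsum_ext N (fun j => phi 1 (x j t0 - M0)) (fun _ => 0)) in H.
     2: { intros k Hk. apply phi_zero. pose proof (rmax_ge N (fun j => x j t0) ltac:(lia) k Hk). unfold M0. lra. }
     rewrite rsum_const0 in H.
     assert (0 < phi 1 (x j t - M0)) by (apply phi_pos; lra).
     pose proof (rsum_term_le N (fun j => phi 1 (x j t - M0)) j ltac:(intros; apply phi_nonneg; lra) Hj).
     simpl in H1. lra. }
 assert (Hm : m0 <= M0) by (pose proof (Hb i t0 Hi ltac:(lra)); lra).
 assert (Hc : forall j t, (j < N)%nat -> t0 < t -> continuity_pt (x j) t).
 { intros j t Hj Ht. apply (ac_cont (x j) t0 (t + 1)). apply (Hsol j Hj). lra. lra. }
 destruct (conv_abstract N x t0 m0 M0 i Hi Hm Hb Hc Hup) as [l Hl].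
 exists l. split; auto. apply (lim_bound (x i) l t0); auto. Qed.
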